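(* Let $G=(V,E)$ be an undirected graph with terminals $s_1,s_2,s_3,s_4\in V$. Let $G'$ be the directed graph with vertex set $V\cup\{s,t\}$ ($s,t$ new) whose arcs are: $(u,v)$ and $(v,u)$ for every edge $uv\in E$, together with the arcs $(s,s_1),(s_1,s),(s_2,s),(s_2,t),(s,s_3),(t,s_3),(t,s_4),(s_4,t)$. Then for every $C\subseteq V\setminus\{s_1,s_2,s_3,s_4\}$: $G-C$ contains no path between $s_i$ and $s_j$ for any $i\neq j$ if and only if $G'-C$ contains no directed path from $s$ to $t$ and no directed path from $t$ to $s$. Consequently, with node weights on $V$ carried over to $G'$ (and terminals $s_1,\dots,s_4,s,t$ not removable), the optimum of 4-terminal node-weighted multiway cut in $G$ equals the optimum node-weighted $st$-bi-cut in $G'$, giving an approximation-preserving reduction from 4-terminal $\textsc{Node-wt-MC}$ to $st$-Bi-Cut.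
   Context: $G-C$ and $G'-C$ denote the graphs obtained by deleting the vertices in $C$. In node-weighted $st$-Bi-Cut, one removes a minimum-weight set of non-terminal vertices so that no directed path from $s$ to $t$ and none from $t$ to $s$ remains. In $\textsc{Node-wt-MC}$ (undirected), one removes a minimum-weight set of non-terminal vertices so that no two distinct terminals remain connected. *)

(* Defs.v *)
From HB Require Import structures.
From mathcomp Require Import all_boot all_order all_algebra.
Set Implicit Arguments. Unset Strict Implicit. Unset Printing Implicit Defensive.
Import Order.TTheory GRing.Theory Num.Theory.

(* The undirected graph G on a finite vertex type V is given by a symmetric
   edge relation e.  G - C: keep only edges with both endpoints outside C. *)
Definition del_rel (T : finType) (r : rel T) (C : {set T}) : rel T :=
  [rel x y | [&& r x y, x \notin C & y \notin C]].

Definition vs {V : finType} : V + bool := inr false.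
Definition vt {V : finType} : V + bool := inr true.

Definition arcG' (V : finType) (e : rel V) (s1 s2 s3 s4 : V) : rel (V + bool) :=
  fun x y =>
    match x, y with
    | inl u, inl v => e u v || e v u
    | inr false, inl v => (v == s1) || (v == s3)
    | inr true,  inl v => (v == s3) || (v == s4)
    | inl u, inr false => (u == s1) || (u == s2)
    | inl u, inr true  => (u == s2) || (u == s4)
    | inr _, inr _ => false
    end.

Definition is_multiway_cut (V : finType) (e : rel V) (s1 s2 s3 s4 : V)
    (C : {set V}) : Prop :=
  [/\ s1 \notin C, s2 \notin C, s3 \notin C & s4 \notin C] /\
  (forall i j : 'I_4, i != j ->
     ~~ connect (del_rel e C) (nth s1 [:: s1; s2; s3; s4] i)
                              (nth s1 [:: s1; s2; s3; s4] j)).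

Definition is_st_bicut (V : finType) (e : rel V) (s1 s2 s3 s4 : V)
    (C' : {set V + bool}) : Prop :=
  [/\ inl s1 \notin C', inl s2 \notin C', inl s3 \notin C' & inl s4 \notin C'] /\
  (vs \notin C' /\ vt \notin C') /\
  ~~ connect (del_rel (arcG' e s1 s2 s3 s4) C') vs vt /\
  ~~ connect (del_rel (arcG' e s1 s2 s3 s4) C') vt vs.

(* Node weights on V carried over to G' (s, t get weight 0; they are
   never removed anyway). *)
Definition wG' (R : numDomainType) (V : finType) (w : V -> R) (x : V + bool) : R :=
  match x with inl v => w v | inr _ => 0%R end.

(* Main.v *)
Require Import Defs.
From HB Require Import structures.
From mathcomp Require Import all_boot all_order all_algebra.
Import Order.TTheory GRing.Theory Num.Theory.

Lemma connect_inv (T : finType) (r : rel T) (Q : T -> Prop) x y :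
  Q x -> (forall a b, Q a -> r a b -> Q b) -> connect r x y -> Q y.
Proof.
move=> Qx H /connectP [p pth ->]; elim: p x Qx pth => //= z p IH x Qx /andP[rxz pz].
exact: IH (H _ _ Qx rxz) pz.
Qed.

Lemma inl_in (V : finType) (C : {set V}) x : ((inl x : V + bool) \in [set inl z | z in C]) = (x \in C).
Proof. by rewrite mem_imset //; move=> a b [->]. Qed.

Lemma inr_in (V : finType) (C : {set V}) b : ((inr b : V + bool) \in [set inl z | z in C]) = false.
Proof. by apply/imsetP => -[z _]. Qed.

Lemma lift_conn (V : finType) (e : rel V) (s1 s2 s3 s4 : V) (C : {set V}) x y :
  connect (del_rel e C) x y ->
  connect (del_rel (arcG' e s1 s2 s3 s4) [set inl z | z in C]) (inl x) (inl y).
Proof.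
move=> /connectP [p pth ->]; apply/connectP; exists (map inl p); last by rewrite last_map.
elim: p x pth => //= z p IH x /andP[/and3P[exz xC zC] pz].
by rewrite IH // andbT /del_rel /= !inl_in exz xC zC.
Qed.

Lemma proj_gen (V : finType) (e : rel V) (s1 s2 s3 s4 : V) (C : {set V})
   (b0 : bool) (l1 l2 : seq V) :
  symmetric e ->
  (forall v, arcG' e s1 s2 s3 s4 (inr b0) (inl v) -> v \in l1) ->
  (forall v, arcG' e s1 s2 s3 s4 (inl v) (inr (~~ b0)) -> v \in l2) ->
  arcG' e s1 s2 s3 s4 (inr b0) (inr (~~ b0)) = false ->
  arcG' e s1 s2 s3 s4 (inr b0) (inr b0) = false ->
  connect (del_rel (arcG' e s1 s2 s3 s4) [set inl z | z in C]) (inr b0) (inr (~~ b0)) ->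
  exists a b, [/\ a \in l1, b \in l2 & connect (del_rel e C) a b].
Proof.
move=> se H1 H2 H3 H4 Hc.
pose Bad := exists a b, [/\ a \in l1, b \in l2 & connect (del_rel e C) a b].
pose Q (y : V + bool) := Bad \/ y = inr b0 \/ exists v a, [/\ y = inl v, a \in l1 & connect (del_rel e C) a v].
suff : Q (inr (~~ b0)).
  case=> [//|[]]; first by case: b0 {H1 H2 H3 H4 Hc Q}.
  by case=> v [a [] //].
apply: (@connect_inv _ _ Q _ _ _ _ Hc); first by right; left.
move=> y z [Hb|[->|[v [a [-> Ha Hav]]]]] Hyz; first by left.
- case: z Hyz => [u|b] /=.
    rewrite /del_rel /= => /andP[Hu _]; right; right; exists u, u; split=> //.
    exact: H1.
  by rewrite /del_rel /= => /andP[]; case: (b0) b.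
- case: z Hyz => [u|b].
    rewrite /del_rel /= !inl_in => /and3P[Hvu vC uC]; right; right; exists u, a; split=> //.
    apply: connect_trans Hav _; apply: connect1; rewrite /del_rel /= vC uC !andbT.
    by case/orP: Hvu => //; rewrite se.
  have [->|nb] := eqVneq b b0; first by right; left.
  have -> : b = ~~ b0 by case: b b0 nb {H1 H2 H3 H4 Hc Q} => [] [].
  move=> Hyz; left; exists a, v; split=> //; apply: H2.
  by move: Hyz; rewrite /del_rel /= => /andP[].
Qed.

Lemma build (V : finType) (e : rel V) (s1 s2 s3 s4 : V) (C : {set V}) b0 b1 a b :
  connect (del_rel e C) a b ->
  arcG' e s1 s2 s3 s4 (inr b0) (inl a) -> arcG' e s1 s2 s3 s4 (inl b) (inr b1) ->
  a \notin C -> b \notin C ->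
  connect (del_rel (arcG' e s1 s2 s3 s4) [set inl z | z in C]) (inr b0) (inr b1).
Proof.
move=> Hab H1 H2 aC bC.
apply: (connect_trans (connect1 _) (connect_trans (@lift_conn _ _ s1 s2 s3 s4 _ _ _ Hab) (connect1 _))).
  by apply/and3P; split; rewrite // ?inr_in ?inl_in.
by apply/and3P; split; rewrite // ?inr_in ?inl_in.
Qed.

Theorem mainTheorem7 (V : finType) (e : rel V) (s1 s2 s3 s4 : V) :
  symmetric e ->
  uniq [:: s1; s2; s3; s4] ->
  (* the main equivalence, for every C subset of V minus the terminals *)
  (forall C : {set V},
     [/\ s1 \notin C, s2 \notin C, s3 \notin C & s4 \notin C] ->
     (forall i j : 'I_4, i != j ->
        ~~ connect (del_rel e C) (nth s1 [:: s1; s2; s3; s4] i)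
                                 (nth s1 [:: s1; s2; s3; s4] j))
     <->
     (~~ connect (del_rel (arcG' e s1 s2 s3 s4) [set inl x | x in C]) vs vt /\
      ~~ connect (del_rel (arcG' e s1 s2 s3 s4) [set inl x | x in C]) vt vs))
  /\
  (* consequently the optima coincide, for any node weights *)
  (forall (R : realDomainType) (w : V -> R) (k : R),
     (exists C : {set V}, is_multiway_cut e s1 s2 s3 s4 C /\
                          (\sum_(v in C) w v <= k)%R)
     <->
     (exists C' : {set V + bool}, is_st_bicut e s1 s2 s3 s4 C' /\
                          (\sum_(x in C') wG' w x <= k)%R)).
Proof.
move=> se un.
have P1 : forall C : {set V},
     [/\ s1 \notin C, s2 \notin C, s3 \notin C & s4 \notin C] ->
     (forall i j : 'I_4, i != j ->
        ~~ connect (del_rel e C) (nth s1 [:: s1; s2; s3; s4] i)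
                                 (nth s1 [:: s1; s2; s3; s4] j))
     <->
     (~~ connect (del_rel (arcG' e s1 s2 s3 s4) [set inl x | x in C]) vs vt /\
      ~~ connect (del_rel (arcG' e s1 s2 s3 s4) [set inl x | x in C]) vt vs).
  move=> C [n1 n2 n3 n4]; split.
  - move=> H; split; apply/negP => Hc.
    + have [a [b [Ha Hb Hab]]] := @proj_gen V e s1 s2 s3 s4 C false [:: s1; s3] [:: s2; s4] se
         (fun v Hv => ltac:(by move: Hv; rewrite /= !inE)) (fun v Hv => ltac:(by move: Hv; rewrite /= !inE)) erefl erefl Hc.
      move: Ha Hb Hab; rewrite !inE => /orP[]/eqP-> /orP[]/eqP->.
      * by move/negP: (H (@Ordinal 4 0 isT) (@Ordinal 4 1 isT) isT).
      * by move/negP: (H (@Ordinal 4 0 isT) (@Ordinal 4 3 isT) isT).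
      * by move/negP: (H (@Ordinal 4 2 isT) (@Ordinal 4 1 isT) isT).
      * by move/negP: (H (@Ordinal 4 2 isT) (@Ordinal 4 3 isT) isT).
    + have [a [b [Ha Hb Hab]]] := @proj_gen V e s1 s2 s3 s4 C true [:: s3; s4] [:: s1; s2] se
         (fun v Hv => ltac:(by move: Hv; rewrite /= !inE)) (fun v Hv => ltac:(by move: Hv; rewrite /= !inE)) erefl erefl Hc.
      move: Ha Hb Hab; rewrite !inE => /orP[]/eqP-> /orP[]/eqP->.
      * by move/negP: (H (@Ordinal 4 2 isT) (@Ordinal 4 0 isT) isT).
      * by move/negP: (H (@Ordinal 4 2 isT) (@Ordinal 4 1 isT) isT).
      * by move/negP: (H (@Ordinal 4 3 isT) (@Ordinal 4 0 isT) isT).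
      * by move/negP: (H (@Ordinal 4 3 isT) (@Ordinal 4 1 isT) isT).
  - move=> [H1 H2].
    have sE : connect_sym (del_rel e C).
      apply: sym_connect_sym => x y; rewrite /del_rel /= se.
      by case: (e y x); case: (x \in C); case: (y \in C).
    move=> [[|[|[|[|i]]]] Hi] [[|[|[|[|j]]]] Hj] //= _; apply/negP => Hc.
    all: try first [ apply: (negP H1); apply: (@build _ _ _ _ _ _ _ _ _ _ _ Hc); by rewrite /= ?eqxx ?orbT
               | apply: (negP H2); apply: (@build _ _ _ _ _ _ _ _ _ _ _ Hc); by rewrite /= ?eqxx ?orbT
               | rewrite sE in Hc; apply: (negP H1); apply: (@build _ _ _ _ _ _ _ _ _ _ _ Hc); by rewrite /= ?eqxx ?orbT
               | rewrite sE in Hc; apply: (negP H2); apply: (@build _ _ _ _ _ _ _ _ _ _ _ Hc); by rewrite /= ?eqxx ?orbT ].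
split=> // R w k; split.
- move=> [C [[[n1 n2 n3 n4] H] Hk]]; exists [set inl x | x in C]; split.
    split; first by rewrite !inl_in.
    split; first by rewrite !inr_in.
    by apply/(P1 C).
  by rewrite big_imset //=; move=> a b _ _ [].
- move=> [C' [[[n1 n2 n3 n4] [[ns nt] [H1 H2]]] Hk]].
  pose C := [set v | (inl v : V + bool) \in C'].
  have eC : C' = [set inl x | x in C].
    apply/setP => -[v|b]; first by rewrite inl_in inE.
    by rewrite inr_in; case: b; apply/negbTE.
  rewrite eC !inl_in in n1 n2 n3 n4; rewrite eC in H1 H2 Hk.
  exists C; split; last by move: Hk; rewrite big_imset //=; move=> a b _ _ [].
  split; first by [].
  by apply/(P1 C).
Qed.
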